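(* Let $\mathcal{M}=(M_\sigma)$ be a linkage $(n,d)$-tope field of type $v=(v_1,\dots,v_d)$ and thickness $k<n$, let $\tau\subseteq L$ be a $(k+1)$-subset and let $C$ be the linkage covector on $\tau\sqcup R$. Then for each $r_i\in R$ there are exactly $v_i+1$ nodes adjacent to $r_i$ in $C$. Furthermore, for each $\ell_j\in\tau$, $C$ contains the tope $M_{\tau\setminus\{\ell_j\}}$ of the tope field, and it is the unique subgraph of $C$ which is a tope with right degree vector $v$ in which $\ell_j$ is isolated (i.e. with left degree vector $\mathbf{1}_{\tau\setminus\{\ell_j\}}$).
   Context: $L=\{\ell_1,\dots,\ell_n\}$, $R=\{r_1,\dots,r_d\}$; graphs are bipartite on $L\sqcup R$, identified with edge sets. For $v\in\mathbb{Z}_{>0}^d$ with $k=\sum v_i\le n$ and a $k$-subset $\sigma\subseteq L$, a tope of type $v$ on $\sigma$ is a graph whose left degree vector is the indicator vector $\mathbf{1}_\sigma$ and whose right degree vector is $v$. An $(n,d)$-tope field of type $v$ (thickness $k$) is a family $(M_\sigma)$ with one tope $M_\sigma$ of type $v$ on $\sigma$ for each $k$-subset $\sigma\subseteq L$. It is linkage if for every $(k+1)$-subset $\tau\subseteq L$, the union $C_\tau$ of the topes $M_\sigma$, $\sigma\subset\tau$, is a tree on the node set $\tau\sqcup R$; $C_\tau$ is called the linkage covector on $\tau$. *)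

(* Defs.v *)
From mathcomp Require Import all_boot.
Set Implicit Arguments. Unset Strict Implicit. Unset Printing Implicit Defensive.

(* L = 'I_n (left nodes l_1..l_n), R = 'I_d (right nodes r_1..r_d).
   A bipartite graph on L ⊔ R is identified with its edge set,
   a subset of L × R. *)
Definition graph (n d : nat) := {set 'I_n * 'I_d}.

Definition ldeg n d (G : graph n d) (l : 'I_n) : nat := #|[set e in G | e.1 == l]|.
Definition rdeg n d (G : graph n d) (r : 'I_d) : nat := #|[set e in G | e.2 == r]|.

Definition thickness d (v : 'I_d -> nat) : nat := \sum_(i < d) v i.

Definition is_tope n d (v : 'I_d -> nat) (sigma : {set 'I_n}) (G : graph n d) : Prop :=
  (forall l : 'I_n, ldeg G l = (l \in sigma) :> nat) /\ (forall r : 'I_d, rdeg G r = v r).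

Definition tope_field n d (v : 'I_d -> nat) (M : {set 'I_n} -> graph n d) : Prop :=
  forall sigma : {set 'I_n}, #|sigma| = thickness v -> is_tope v sigma (M sigma).

Definition node n d := ('I_n + 'I_d)%type.
Definition adj n d (G : graph n d) : rel (node n d) :=
  fun x y => match x, y with
             | inl l, inr r => (l, r) \in G
             | inr r, inl l => (l, r) \in G
             | _, _ => false
             end.

Definition nodeset n d (tau : {set 'I_n}) : pred (node n d) :=
  fun x => match x with inl l => l \in tau | inr _ => true end.

(* G is a tree on the node set tau ⊔ R: all its edges lie on this node set,
   it is connected on this node set, and it has no cycle (a cycle being a
   closed walk through at least 3 pairwise distinct nodes). *)
Definition is_tree_on n d (tau : {set 'I_n}) (G : graph n d) : Prop :=
  [/\ (forall e, e \in G -> e.1 \in tau),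
      (forall x y : node n d, nodeset tau x -> nodeset tau y -> connect (adj G) x y)
    & (forall c : seq (node n d), ~ (ucycle (adj G) c /\ 2 < size c))].

Definition covector n d (v : 'I_d -> nat) (M : {set 'I_n} -> graph n d)
    (tau : {set 'I_n}) : graph n d :=
  \bigcup_(sigma : {set 'I_n} | (sigma \subset tau) && (#|sigma| == thickness v)) M sigma.

Definition linkage n d (v : 'I_d -> nat) (M : {set 'I_n} -> graph n d) : Prop :=
  forall tau : {set 'I_n}, #|tau| = (thickness v).+1 -> is_tree_on tau (covector v M tau).

(* Main.v *)
Require Import Defs.
From mathcomp Require Import all_boot.
Set Implicit Arguments. Unset Strict Implicit. Unset Printing Implicit Defensive.

Section Helpers.
Variables n d : nat.
Implicit Types (G H : graph n d) (e : 'I_n * 'I_d).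

Lemma adj_sym G : symmetric (adj G).
Proof. by case=> [a|b] [a'|b']. Qed.

Lemma conn_sym G : connect_sym (adj G).
Proof. exact: sym_connect_sym (adj_sym G). Qed.

Lemma adj_sub G H : G \subset H -> subrel (adj G) (adj H).
Proof.
move=> /subsetP s [a|b] [a'|b'] //=; exact: s.
Qed.

Lemma conn_subg G H x y : G \subset H -> connect (adj G) x y -> connect (adj H) x y.
Proof.
move=> s; apply: connect_sub => u w h; apply: connect1; exact: adj_sub h.
Qed.

Lemma adj_e G e : adj G (inl e.1) (inr e.2) = (e \in G).
Proof. by case: e. Qed.

Lemma adjD G e x y : adj G x y -> ~~ adj (G :\ e) x y ->
  (x == inl e.1) && (y == inr e.2) || (x == inr e.2) && (y == inl e.1).
Proof.
case: x y => [a|b] [a'|b'] //=; rewrite in_setD1 => -> ; rewrite andbT negbK;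
  case: e => [l r] /eqP [-> ->]; rewrite !eqxx ?orbT //.
Qed.

Lemma conn_split H e rho z : connect (adj H) rho z ->
  [|| connect (adj (H :\ e)) rho z, connect (adj (H :\ e)) rho (inl e.1)
    | connect (adj (H :\ e)) rho (inr e.2)].
Proof.
pose P := [pred y | [|| connect (adj (H :\ e)) rho y, connect (adj (H :\ e)) rho (inl e.1)
    | connect (adj (H :\ e)) rho (inr e.2)]].
have cl : closed (adj H) P.
  apply: intro_closed; first exact: conn_sym.
  move=> x y hxy; rewrite !inE => /or3P [c|->|->]; rewrite ?orbT //.
  case hD: (adj (H :\ e) x y).
    by rewrite (connect_trans c (connect1 hD)).
  move: (@adjD H e x y hxy (negbT hD)) => /orP [] /andP [/eqP ex _]; subst x;
    by rewrite c ?orbT.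
move=> c; have := closed_connect cl c.
by rewrite !inE connect0 /= => <-.
Qed.

Lemma cycle_of H e : e \in H -> connect (adj (H :\ e)) (inl e.1) (inr e.2) ->
  exists c, ucycle (adj H) c /\ 2 < size c.
Proof.
move=> eH /connectP [p pp lp].
move: lp; case: (shortenP pp) => p' pp' up' _ lp.
exists (inl e.1 :: p'); split.
  rewrite /ucycle up' andbT /cycle rcons_path -lp.
  rewrite (sub_path (@adj_sub _ H (subsetDl H [set e])) pp') /=.
  by case: e eH {pp lp pp' up'} => l r.
case: p' pp' up' lp => [|y [|z q]] //= pp' _ lp.
move: pp'; rewrite andbT -lp; case: e eH {pp} lp => l r /= eH _.
by rewrite in_setD1 eqxx.
Qed.

End Helpers.

Section Tree.
Variables n d : nat.
Variable tau : {set 'I_n}.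
Variable C : graph n d.
Hypothesis hT : is_tree_on tau C.

Lemma tree_nocon e : e \in C -> ~~ connect (adj (C :\ e)) (inl e.1) (inr e.2).
Proof.
move=> eC; apply/negP => c; case: (cycle_of eC c) => cy [u s].
case: hT => _ _ /(_ cy); apply; split=> //.
Qed.

Lemma conn_edge (G : graph n d) e (x : node n d) : e \in G ->
  connect (adj G) x (inl e.1) = connect (adj G) x (inr e.2).
Proof.
move=> eG; apply: (same_connect1r (@conn_sym n d G)); by rewrite adj_e.
Qed.

Variable rho : node n d.
Hypothesis hrho : nodeset tau rho.

Definition c1 e := connect (adj (C :\ e)) rho (inl e.1).
Definition phi e : node n d := if c1 e then inr e.2 else inl e.1.
Definition oth e : node n d := if c1 e then inl e.1 else inr e.2.

Lemma phi_nc e : e \in C -> ~~ connect (adj (C :\ e)) rho (phi e).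
Proof.
move=> eC; rewrite /phi; case h: (c1 e) => //; last by rewrite /c1 in h; rewrite h.
apply/negP => c; move/negP: (tree_nocon eC); apply.
apply: connect_trans c; by rewrite (conn_sym (C :\ e)).
Qed.

Lemma oth_c e : e \in C -> connect (adj (C :\ e)) rho (oth e).
Proof.
move=> eC; have hr : connect (adj C) rho (inl e.1).
  case: hT => hl hc _; apply: hc => //=; exact: hl.
have := phi_nc eC; rewrite /oth /phi.
case/or3P: (conn_split e hr) => h; case hc: (c1 e) => //; rewrite /c1 in hc;
  by rewrite ?h in hc *.
Qed.

Lemma adj_oth (G : graph n d) e : adj G (oth e) (phi e) = (e \in G).
Proof. by rewrite /oth /phi; case: (c1 e); rewrite ?adj_e // adj_sym adj_e. Qed.

Lemma phi_endp (G : graph n d) e x : e \in G -> connect (adj G) x (inl e.1) ->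
  connect (adj G) x (phi e).
Proof. by move=> eG h; rewrite /phi; case: (c1 e) => //; rewrite -conn_edge. Qed.

Lemma phi_inj : {in C &, injective phi}.
Proof.
move=> e1 e2 e1C e2C hp; case: (eqVneq e1 e2) => // ne; exfalso.
have e2C1 : e2 \in C :\ e1 by rewrite in_setD1 eq_sym ne.
have e1C2 : e1 \in C :\ e2 by rewrite in_setD1 ne.
case/or3P: (conn_split e1 (oth_c e2C)) => h.
- have h1 : connect (adj (C :\ e1)) rho (oth e2).
    apply: conn_subg h; apply/subsetP => x; rewrite !in_setD1 => /and3P [-> _ ->].
    by [].
  have := phi_nc e1C; rewrite hp.
  by rewrite (connect_trans h1 (connect1 _)) // adj_oth.
- have := phi_nc e2C; rewrite -hp.
  by rewrite (phi_endp e1C2) // (conn_subg _ h) // subsetDl.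
- have := phi_nc e2C; rewrite -hp.
  by rewrite (phi_endp e1C2) // conn_edge // (conn_subg _ h) // subsetDl.
Qed.

End Tree.

Section Bound.
Variables n d : nat.
Variable tau : {set 'I_n}.
Variable C : graph n d.
Hypothesis hT : is_tree_on tau C.

Lemma card_nodeset : #|[set x : node n d | nodeset tau x]| = #|tau| + d.
Proof.
have -> : [set x : node n d | nodeset tau x] = (@inl _ 'I_d) @: tau :|: (@inr 'I_n _) @: setT.
  apply/setP => [[a|b]]; rewrite !inE /=.
    apply/idP/orP => [h|[|]].
    - by left; apply/imsetP; exists a.
    - by case/imsetP => y yt [->].
    - by case/imsetP.
  by apply/esym/orP; right; apply/imsetP; exists b.
rewrite cardsU !card_imset; try by move=> ? ? [].
rewrite cardsT card_ord.
have -> : (@inl _ 'I_d) @: tau :&: (@inr 'I_n _) @: setT = set0.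
  apply/setP => [[a|b]]; rewrite !inE; apply/negP => /andP [];
    [move=> _ /imsetP [] // | move=> /imsetP [] //].
by rewrite cards0 subn0.
Qed.

Lemma edge_bound t : t \in tau -> #|C| <= #|tau| + d - 1.
Proof.
move=> tt.
have hr : nodeset tau (inl t : node n d) by [].
rewrite -(card_in_imset (phi_inj hT hr)).
rewrite -card_nodeset (cardsD1 (inl t) [set x : node n d | nodeset tau x]).
rewrite inE /= tt add1n subn1 /=.
apply: subset_leq_card; apply/subsetP => x /imsetP [e eC ->].
rewrite !inE; apply/andP; split.
  apply/negP => /eqP h; have := phi_nc hT (inl t) eC; by rewrite h connect0.
rewrite /phi; case: (c1 _ _ _) => //=; case: hT => hl _ _; exact: hl.
Qed.
End Bound.

Section Count.
Variables n d : nat.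

Lemma card_left (X : graph n d) (S : {set 'I_n}) :
  #|[set e in X | e.1 \in S]| = \sum_(a in S) ldeg X a.
Proof.
rewrite -sum1_card (partition_big (fun e : 'I_n * 'I_d => e.1) (mem S)) /=.
  apply: eq_bigr => a aS; rewrite /ldeg -sum1_card; apply: eq_bigl => e.
  rewrite !inE; case: eqP => [->|_]; by rewrite ?aS ?andbT ?andbF.
by move=> e; rewrite inE => /andP [].
Qed.

Lemma card_right (X : graph n d) (S : {set 'I_d}) :
  #|[set e in X | e.2 \in S]| = \sum_(a in S) rdeg X a.
Proof.
rewrite -sum1_card (partition_big (fun e : 'I_n * 'I_d => e.2) (mem S)) /=.
  apply: eq_bigr => a aS; rewrite /rdeg -sum1_card; apply: eq_bigl => e.
  rewrite !inE; case: eqP => [->|_]; by rewrite ?aS ?andbT ?andbF.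
by move=> e; rewrite inE => /andP [].
Qed.

Lemma card_nb (X : graph n d) i : #|[set l | (l, i) \in X]| = rdeg X i.
Proof.
have E : [set e in X | e.2 == i] = (fun l => (l, i)) @: [set l | (l, i) \in X].
  apply/setP => [[a b]]; rewrite !inE /=.
  apply/andP/imsetP => [[h /eqP eb]|[l]].
    by subst b; exists a => //; rewrite inE.
  by rewrite inE => h [-> ->].
rewrite /rdeg E card_imset //.
by move=> a b [].
Qed.

Lemma ldeg0 (X : graph n d) l i : ldeg X l = 0 -> (l, i) \notin X.
Proof.
move=> h; apply/negP => li; move: h; rewrite /ldeg => /eqP; rewrite cards_eq0 => /eqP h.
by have := in_set0 (l, i); rewrite -h inE li eqxx.
Qed.

Variable v : 'I_d -> nat.

Lemma lemB (sigma : {set 'I_n}) (G M : graph n d) e :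
  is_tope v sigma G -> is_tope v sigma M -> e \in G -> e \notin M ->
  connect (adj ((G :|: M) :\ e)) (inl e.1) (inr e.2).
Proof.
move=> [gl gr] [ml mr] eG eM; apply/negPn/negP => nc.
set H := (G :|: M) :\ e.
set KL := [set a | connect (adj H) (inr e.2) (inl a)].
set KR := [set b | connect (adj H) (inr e.2) (inr b)].
have cl : forall X : graph n d, X \subset H ->
    [set x in X | x.1 \in KL] = [set x in X | x.2 \in KR].
  move=> X /subsetP XH; apply/setP => [[a b]]; rewrite !inE /=.
  case xX: ((a, b) \in X) => //=.
  by have := conn_edge (inr e.2) (XH _ xX).
have GH : G :\ e \subset H by apply: setSD; apply: subsetUl.
have MH : M \subset H.
  apply/subsetP => x xM; rewrite in_setD1 in_setU xM orbT andbT.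
  by apply/negP => /eqP h; rewrite -h xM in eM.
have e1 : e.1 \notin KL.
  rewrite inE; apply/negP => h; move/negP: nc; apply; by rewrite (conn_sym H).
have e2 : e.2 \in KR by rewrite inE connect0.
have cG1 : #|[set x in G | x.1 \in KL]| = #|[set x in G :\ e | x.1 \in KL]|.
  apply: eq_card => x; rewrite !inE; case: eqP => // ->.
  by move: e1; rewrite inE => /negbTE ->; rewrite !andbF.
have cG2 : #|[set x in G | x.2 \in KR]| = #|[set x in G :\ e | x.2 \in KR]| + 1.
  rewrite (cardsD1 e) inE eG e2 addnC; congr (_ + _).
  by apply: eq_card => x; rewrite !inE andbA.
have sL : #|[set x in G | x.1 \in KL]| = #|[set x in M | x.1 \in KL]|.
  by rewrite !card_left; apply: eq_bigr => a _; rewrite gl ml.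
have sR : #|[set x in G | x.2 \in KR]| = #|[set x in M | x.2 \in KR]|.
  by rewrite !card_right; apply: eq_bigr => a _; rewrite gr mr.
move: cG2; rewrite -(cl _ GH) -cG1 sL sR (cl _ MH) addn1.
by move/eqP; rewrite -[X in X == _]addn0 -addn1 eqn_add2l.
Qed.

End Count.

Lemma uniq_sub n d (v : 'I_d -> nat) (tau sigma : {set 'I_n}) (C G M : graph n d) :
  is_tree_on tau C -> G \subset C -> M \subset C ->
  is_tope v sigma G -> is_tope v sigma M -> G \subset M.
Proof.
move=> hT GC MC tG tM; apply/subsetP => e eG; apply/negPn/negP => eM.
have c := lemB tG tM eG eM.
have eU : e \in G :|: M by rewrite in_setU eG.
case: (cycle_of eU c) => cy [/andP [cc u] s].
case: hT => _ _ /(_ cy); apply; split => //.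
rewrite /ucycle u andbT; apply: sub_cycle cc; apply: adj_sub.
by rewrite subUset GC MC.
Qed.

Theorem lemma3p10 (n d : nat) (v : 'I_d -> nat) (M : {set 'I_n} -> graph n d)
  (hv : forall i, 0 < v i) (hk : thickness v < n)
  (hM : tope_field v M) (hlink : linkage v M)
  (tau : {set 'I_n}) (htau : #|tau| = (thickness v).+1) :
  (forall i : 'I_d, #|[set l : 'I_n | (l, i) \in covector v M tau]| = (v i).+1) /\
  (forall j : 'I_n, j \in tau ->
     M (tau :\ j) \subset covector v M tau /\
     (forall G : graph n d, G \subset covector v M tau ->
        is_tope v (tau :\ j) G -> G = M (tau :\ j))).
Proof.
set C := covector v M tau.
have hT := hlink tau htau.
have cs : forall j, j \in tau -> #|tau :\ j| = thickness v.
  by move=> j jt; move: htau; rewrite (cardsD1 j) jt add1n => [[]].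
have tp : forall j, j \in tau -> is_tope v (tau :\ j) (M (tau :\ j)).
  by move=> j jt; apply: hM; apply: cs.
have sub : forall j, j \in tau -> M (tau :\ j) \subset C.
  move=> j jt; rewrite /C /covector.
  apply: (bigcup_sup (tau :\ j)); by rewrite subsetDl cs // eqxx.
split; last first.
  move=> j jt; split; first exact: sub.
  move=> G GC tG; apply/eqP; rewrite eqEsubset.
  by rewrite (uniq_sub hT GC (sub _ jt) tG (tp _ jt)) (uniq_sub hT (sub _ jt) GC (tp _ jt) tG).
have [t tt] : exists t, t \in tau.
  by apply/card_gt0P; rewrite htau.
have hl : forall e, e \in C -> e.1 \in tau by case: hT.
have lower : forall i, (v i).+1 <= #|[set l | (l, i) \in C]|.
  move=> i.
  have : 0 < rdeg (M (tau :\ t)) i by case: (tp _ tt) => _ ->.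
  rewrite /rdeg => /card_gt0P [e]; rewrite inE => /andP [eM /eqP ei].
  have eC : e \in C by apply: (subsetP (sub _ tt)).
  set l0 := e.1.
  have l0t : l0 \in tau by apply: hl.
  have l0N : l0 \in [set l | (l, i) \in C] by rewrite inE -ei -surjective_pairing.
  rewrite (cardsD1 l0) l0N add1n ltnS.
  case: (tp _ l0t) => tl tr; rewrite -(tr i) -card_nb.
  apply: subset_leq_card; apply/subsetP => l; rewrite !inE => h.
  rewrite (subsetP (sub _ l0t) _ h) andbT; apply/negP => /eqP el.
  have := @ldeg0 _ _ (M (tau :\ l0)) l0 i; rewrite tl !inE eqxx /= => /(_ erefl).
  by move=> hh; move/negP: hh; apply; move: h; rewrite el.
have tot : \sum_i #|[set l | (l, i) \in C]| <= \sum_(i < d) (v i).+1.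
  have -> : \sum_(i < d) (v i).+1 = thickness v + d.
    by under eq_bigr do rewrite -addn1; rewrite big_split /= sum1_card card_ord.
  have eb := edge_bound hT tt; rewrite htau addSn subn1 /= in eb.
  apply: leq_trans eb.
  under eq_bigr do rewrite card_nb.
  have -> : \sum_(i < d) rdeg C i = \sum_(a in [set: 'I_d]) rdeg C a.
    by apply: eq_bigl => a; rewrite inE.
  rewrite -(card_right C setT) subset_leq_card //.
  by apply/subsetP => e; rewrite inE => /andP [].
move=> i; apply/eqP; rewrite eqn_leq lower andbT leqNgt; apply/negP => gt.
move: tot; rewrite leqNgt => /negP; apply.
rewrite (bigD1 i) //= [X in _ < X](bigD1 i) //=.
rewrite -addSn; apply: leq_add; first exact: gt. by apply: leq_sum => j _; apply: lower.
Qed.
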